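(* Let $p$ be prime, $G=\mathbb{Z}_{p^2}\times\mathbb{Z}_p$, and $A\subset G$ with $\#A>p^2$. Then for every $\mathbf{d}\in G\setminus\{0\}$ we have $(A-A)\cap\mathbf{d}G^*\neq\emptyset$.
   Context: $G^*$ denotes the set of invertible elements of the ring $G=\mathbb{Z}_{p^2}\times\mathbb{Z}_p$, i.e. pairs $(u_1,u_2)$ with $u_1\in\mathbb{Z}_{p^2}^*$, $u_2\in\mathbb{Z}_p^*$; for $\mathbf{d}=(d_1,d_2)$, $\mathbf{d}G^*=\{(d_1u_1,d_2u_2):(u_1,u_2)\in G^*\}$. $A-A=\{a-a':a,a'\in A\}$. *)

(* Defs.v *)
From HB Require Import structures.
From mathcomp Require Import all_boot all_order all_algebra.
Set Implicit Arguments. Unset Strict Implicit. Unset Printing Implicit Defensive.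
Import GRing.Theory.
Local Open Scope ring_scope.

Definition Gty (p : nat) : finType := ('Z_(p ^ 2) * 'Z_p)%type.

Definition Gunit (p : nat) (u : Gty p) : bool :=
  (u.1 \is a GRing.unit) && (u.2 \is a GRing.unit).

Definition dGstar (p : nat) (d : Gty p) : {set Gty p} :=
  [set x : Gty p | [exists u : Gty p, Gunit u && (x == (d.1 * u.1, d.2 * u.2))]].

Definition diffset (p : nat) (A : {set Gty p}) : {set Gty p} :=
  [set x : Gty p | [exists a : Gty p, exists a' : Gty p,
     [&& a \in A, a' \in A & x == (a.1 - a'.1, a.2 - a'.2)]]].

(* Main.v *)
Require Import Defs.
From mathcomp Require Import all_boot all_order all_algebra.
Import GRing.Theory.
Local Open Scope ring_scope.

Lemma p2gt1 {p : nat} : prime p -> (1 < p ^ 2)%N.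
Proof. move=> hp; have p1 := prime_gt1 hp.
by rewrite (ltn_trans p1) // -{1}(expn1 p) ltn_exp2l. Qed.

Lemma valZ2 {p : nat} (hp : prime p) (x : 'Z_(p ^ 2)) : (nat_of_ord x < p ^ 2)%N.
Proof. apply: (leq_trans (ltn_ord x)); apply: eq_leq; exact: Zp_cast (p2gt1 hp). Qed.

Lemma unitZ2n {p : nat} (hp : prime p) (k : nat) :
  ((k%:R : 'Z_(p ^ 2)) \is a GRing.unit) = ~~ (p %| k)%N.
Proof. by rewrite unitZpE ?p2gt1 // coprime_pexpl // prime_coprime. Qed.

Lemma unitZ2 {p : nat} (hp : prime p) (x : 'Z_(p ^ 2)) :
  (x \is a GRing.unit) = ~~ (p %| x)%N.
Proof. by rewrite -{1}[x]natr_Zp unitZ2n. Qed.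

Lemma decompP {p : nat} (hp : prime p) {x : 'Z_(p ^ 2)} :
  x != 0 -> (p %| x)%N -> exists2 k : nat, ~~ (p %| k)%N & x = k%:R * p%:R.
Proof.
move=> x0 px; exists (nat_of_ord x %/ p)%N.
  have xp : (0 < nat_of_ord x)%N.
    by rewrite lt0n; apply: contra x0 => /eqP h; apply/eqP/val_inj.
  have p0 := prime_gt0 hp.
  rewrite gtnNdvd //.
    by rewrite divn_gt0 // dvdn_leq.
  by rewrite ltn_divLR // mulnn valZ2.
by rewrite -natrM divnK // natr_Zp.
Qed.

Lemma comp1 {p : nat} (hp : prime p) (d z : 'Z_(p ^ 2)) :
  [|| (d == 0) && (z == 0), ~~ (p %| d)%N && ~~ (p %| z)%N |
      [&& d != 0, (p %| d)%N, z != 0 & (p %| z)%N]] ->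
  exists2 u, u \is a GRing.unit & z = d * u.
Proof.
case/or3P.
- by case/andP=> /eqP -> /eqP ->; exists 1; rewrite ?unitr1 ?mul0r.
- case/andP=> pd pz; exists (d^-1 * z).
    by rewrite unitrM unitrV !unitZ2 // pd pz.
  by rewrite mulrA mulrV ?mul1r // unitZ2.
case/and4P=> d0 pd z0 pz.
have [k pk ->] := decompP hp d0 pd.
have [m pm ->] := decompP hp z0 pz.
exists (k%:R^-1 * m%:R).
  by rewrite unitrM unitrV !(unitZ2n hp) pk pm.
by rewrite mulrCA !mulrA mulVr ?(unitZ2n hp) // mul1r mulrC.
Qed.
Lemma card_key2 (T : finType) (A : {set T}) (p : nat) (f g : T -> nat) :
  (forall a, a \in A -> f a < p)%N -> (forall a, a \in A -> g a < p)%N ->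
  {in A &, forall a b, f a = f b -> g a = g b -> a = b} ->
  (#|A| <= p * p)%N.
Proof.
move=> hf hg inj.
pose h a := (f a * p + g a)%N.
have [p0|p0] := posnP p.
  rewrite eq_card0 // => a; apply/negbTE/negP => aA.
  by have := hf a aA; rewrite p0 ltn0.
have hinj : {in enum A &, injective h}.
  move=> a b; rewrite !mem_enum => aA bA hab.
  have e1 : (h a %/ p = f a)%N by rewrite /h divnMDl // divn_small ?hg // addn0.
  have e2 : (h a %% p = g a)%N by rewrite /h modnMDl modn_small ?hg.
  have e3 : (h b %/ p = f b)%N by rewrite /h divnMDl // divn_small ?hg // addn0.
  have e4 : (h b %% p = g b)%N by rewrite /h modnMDl modn_small ?hg.
  by apply: inj => //; [rewrite -e1 -e3 hab | rewrite -e2 -e4 hab].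
rewrite cardE -(size_map h) -(size_iota 0 (p * p)).
apply: uniq_leq_size; first by rewrite map_inj_in_uniq ?enum_uniq.
move=> x /mapP [a]; rewrite mem_enum => aA ->.
rewrite mem_iota add0n /h /=.
apply: (@leq_trans (f a * p + p)); first by rewrite ltn_add2l hg.
by rewrite -mulSnr leq_mul2r hf ?orbT.
Qed.


Definition qq {p} (a : Gty p) := (nat_of_ord a.1 %/ p)%N.
Definition rr {p} (a : Gty p) := (nat_of_ord a.1 %% p)%N.
Definition ss {p} (a : Gty p) := nat_of_ord a.2.

Section Comb.
Variable p : nat.
Hypothesis hp : prime p.

Lemma valZ1 (x : 'Z_p) : (nat_of_ord x < p)%N.
Proof. apply: (leq_trans (ltn_ord x)); apply: eq_leq; exact: Zp_cast (prime_gt1 hp). Qed.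

Lemma qq_lt (a : Gty p) : (qq a < p)%N.
Proof. by rewrite /qq ltn_divLR ?prime_gt0 // mulnn valZ2. Qed.
Lemma rr_lt (a : Gty p) : (rr a < p)%N.
Proof. by rewrite /rr ltn_mod prime_gt0. Qed.
Lemma ss_lt (a : Gty p) : (ss a < p)%N.
Proof. exact: valZ1. Qed.

Lemma eq1 {a b : Gty p} : qq a = qq b -> rr a = rr b -> a.1 = b.1.
Proof. by move=> h1 h2; apply: val_inj; rewrite /= (divn_eq a.1 p) (divn_eq b.1 p) -/(qq a) -/(rr a) h1 h2. Qed.

Lemma eq2 {a b : Gty p} : ss a = ss b -> a.2 = b.2.
Proof. by move=> h; apply: val_inj. Qed.

Lemma eqG {a b : Gty p} : a.1 = b.1 -> a.2 = b.2 -> a = b.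
Proof. by case: a b => [a1 a2] [b1 b2] /= -> ->. Qed.


Lemma caseEN (A : {set Gty p}) :
  (forall a b, a \in A -> b \in A -> ~~ ((a.1 == b.1) && (a.2 != b.2))) ->
  (#|A| <= p * p)%N.
Proof.
move=> H; apply: (@card_key2 _ A p qq rr) => [a _|a _|a b aA bA h1 h2].
- exact: qq_lt.
- exact: rr_lt.
have e1 := eq1 h1 h2.
apply: eqG => //; apply/eqP; move: (H a b aA bA); by rewrite e1 eqxx /= negbK.
Qed.

Lemma caseUE (A : {set Gty p}) :
  (forall a b, a \in A -> b \in A -> ~~ ((rr a != rr b) && (a.2 == b.2))) ->
  (#|A| <= p * p)%N.
Proof.
move=> H; apply: (@card_key2 _ A p qq ss) => [a _|a _|a b aA bA h1 h2].
- exact: qq_lt.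
- exact: ss_lt.
have e2 := eq2 h2.
apply: eqG => //; apply: eq1 => //; apply/eqP; move: (H a b aA bA).
by rewrite e2 eqxx andbT negbK.
Qed.

Lemma casePE (A : {set Gty p}) :
  (forall a b, a \in A -> b \in A -> ~~ [&& rr a == rr b, a.1 != b.1 & a.2 == b.2]) ->
  (#|A| <= p * p)%N.
Proof.
move=> H; apply: (@card_key2 _ A p rr ss) => [a _|a _|a b aA bA h1 h2].
- exact: rr_lt.
- exact: ss_lt.
have e2 := eq2 h2.
apply: eqG => //; apply/eqP; move: (H a b aA bA).
by rewrite e2 h1 !eqxx andbT /= negbK.
Qed.

Lemma caseUN (A : {set Gty p}) :
  (forall a b, a \in A -> b \in A -> ~~ ((rr a != rr b) && (a.2 != b.2))) ->
  (#|A| <= p * p)%N.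
Proof.
move=> H.
have Hab : forall a b, a \in A -> b \in A -> rr a != rr b -> a.2 = b.2.
  move=> a b aA bA hr; apply/eqP; move: (H a b aA bA); by rewrite hr /= negbK.
case: (boolP [exists b in A, exists c in A, rr b != rr c]).
  case/existsP=> b0 /andP [b0A /existsP [c0 /andP [c0A hbc]]].
  have all2 : forall x, x \in A -> x.2 = b0.2.
    move=> x xA; apply/eqP; apply/negPn/negP => hx.
    have hxb : rr x = rr b0.
      by apply/eqP; apply: contraNT hx => /(Hab _ _ xA b0A) ->.
    have hxc : rr x = rr c0.
      apply/eqP; apply: contraNT hx => /(Hab _ _ xA c0A) ->.
      by rewrite (Hab _ _ b0A c0A hbc).
    by move: hbc; rewrite -hxb -hxc eqxx.
  apply: (@card_key2 _ A p qq rr) => [a _|a _|a b aA bA h1 h2].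
  - exact: qq_lt.
  - exact: rr_lt.
  by apply: eqG; [exact: eq1 | rewrite (all2 a aA) (all2 b bA)].
rewrite negb_exists_in => /forall_inP Hr.
apply: (@card_key2 _ A p qq ss) => [a _|a _|a b aA bA h1 h2].
- exact: qq_lt.
- exact: ss_lt.
apply: eqG; last exact: eq2.
apply: eq1 => //; apply/eqP.
by move: (Hr a aA); rewrite negb_exists_in => /forall_inP /(_ b bA); rewrite negbK.
Qed.

Definition allq (A : {set Gty p}) (t : nat) :=
  [forall b in A, forall c in A, (rr b == t) ==> (rr c == t) ==> (b.1 == c.1)].

Lemma casePN (A : {set Gty p}) :
  (forall a b, a \in A -> b \in A -> ~~ [&& rr a == rr b, a.1 != b.1 & a.2 != b.2]) ->
  (#|A| <= p * p)%N.
Proof.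
move=> H.
have Hab : forall a b, a \in A -> b \in A -> rr a = rr b -> a.1 != b.1 -> a.2 = b.2.
  move=> a b aA bA hr h1; apply/eqP; move: (H a b aA bA); by rewrite hr h1 eqxx /= negbK.
apply: (@card_key2 _ A p rr (fun a => if allq A (rr a) then ss a else qq a))
  => [a _|a _|a b aA bA h1].
- exact: rr_lt.
- by case: ifP => _; [exact: ss_lt | exact: qq_lt].
rewrite -h1; case: (boolP (allq A (rr a))) => hq h2.
  apply: eqG; last exact: eq2.
  move/forall_inP: hq => /(_ a aA) /forall_inP /(_ b bA).
  by rewrite h1 eqxx /= => /eqP.
move: hq; rewrite /allq negb_forall_in => /existsP [b0 /andP [b0A]].
rewrite negb_forall_in => /existsP [c0 /andP [c0A]].
case: (rr b0 =P rr a) => // hb0; case: (rr c0 =P rr a) => // hc0 /= hbc.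
have all2 : forall x, x \in A -> rr x = rr a -> x.2 = b0.2.
  move=> x xA hx; apply/eqP; apply/negPn/negP => hx2.
  have hxb : x.1 = b0.1.
    apply/eqP; apply: contraNT hx2 => /(Hab _ _ xA b0A) -> //.
    by rewrite hx hb0.
  have hxc : x.1 = c0.1.
    apply/eqP; apply: contraNT hx2 => /(Hab _ _ xA c0A) ->.
      by rewrite (Hab _ _ b0A c0A) // hb0 hc0.
    by rewrite hx hc0.
  by move: hbc; rewrite -hxb -hxc eqxx.
apply: eqG; first exact: eq1.
by rewrite (all2 a aA erefl) (all2 b bA (esym h1)).
Qed.

End Comb.
Lemma aux_dvd (p z x y : nat) : (z + y = x %[mod p])%N -> (p %| z)%N = (x %% p == y %% p)%N.
Proof. move=> E; rewrite -E -{2}(add0n y) eqn_modDr mod0n. by rewrite /dvdn. Qed.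

Lemma subZ_dvd (p : nat) (hp : prime p) (x y : 'Z_(p ^ 2)) :
  (p %| nat_of_ord (x - y)%R)%N = (nat_of_ord x %% p == nat_of_ord y %% p)%N.
Proof.
have p1 : (1 < p)%N by apply: prime_gt1.
have := congr1 val (subrK y x) => /= H.
apply: aux_dvd.
rewrite -[in RHS]H modn_dvdm // Zp_cast ?dvdn_exp //.
by rewrite (ltn_trans p1) // -{1}(expn1 p) ltn_exp2l.
Qed.

Lemma unitZ1 {p : nat} (hp : prime p) (x : 'Z_p) : (x \is a GRing.unit) = (x != 0).
Proof.
rewrite -{1}[x]natr_Zp unitZpE ?prime_gt1 // prime_coprime //.
case: (eqVneq x 0) => [->|x0] /=; first by rewrite dvdn0.
rewrite gtnNdvd ?valZ1 // lt0n; apply: contra x0 => /eqP h; apply/eqP/val_inj.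
by rewrite /= h.
Qed.

Lemma comp2 {p : nat} (hp : prime p) (d z : 'Z_p) :
  (d == 0) = (z == 0) -> exists2 u, u \is a GRing.unit & z = d * u.
Proof.
case: (eqVneq d 0) => [-> /esym/eqP ->|d0 /esym/negbT z0].
  by exists 1; rewrite ?unitr1 ?mul0r.
exists (d^-1 * z); first by rewrite unitrM unitrV !(unitZ1 hp) d0 z0.
by rewrite mulrA mulrV ?mul1r // (unitZ1 hp).
Qed.

Theorem lemma5p1 (p : nat) (hp : prime p) (A : {set Gty p})
  (hA : (p ^ 2 < #|A|)%N) (d : Gty p) (hd : d != (0, 0)) :
  diffset A :&: dGstar d != set0.
Proof.
case: d hd => d1 d2 hd.
pose rel1 (d1 z : 'Z_(p ^ 2)) := [|| (d1 == 0) && (z == 0), ~~ (p %| d1)%N && ~~ (p %| z)%N |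
      [&& d1 != 0, (p %| d1)%N, z != 0 & (p %| z)%N]].
pose cond (a b : Gty p) := rel1 d1 (a.1 - b.1) && ((d2 == 0) == (a.2 - b.2 == 0)).
case: (boolP [exists a in A, exists b in A, cond a b]).
  case/existsP=> a /andP [aA /existsP [b /andP [bA /andP [c1 /eqP c2]]]].
  have [u1 u1U e1] := comp1 hp _ _ c1.
  have [u2 u2U e2] := comp2 hp _ _ c2.
  apply/set0Pn; exists (a.1 - b.1, a.2 - b.2); rewrite inE; apply/andP; split.
    rewrite inE; apply/existsP; exists a; apply/existsP; exists b.
    by rewrite aA bA eqxx.
  rewrite inE; apply/existsP; exists (u1, u2).
  by rewrite /Gunit /= u1U u2U /= -e1 -e2 eqxx.
rewrite negb_exists_in => /forall_inP Hn.
have Hno : forall a b, a \in A -> b \in A -> ~~ cond a b.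
  move=> a b aA bA; move: (Hn a aA); rewrite negb_exists_in => /forall_inP.
  exact.
suff: (#|A| <= p * p)%N by rewrite mulnn leqNgt hA.
have E1 : forall a b : Gty p, (a.1 - b.1 == 0) = (a.1 == b.1) by move=> a b; rewrite subr_eq0.
have E2 : forall a b : Gty p, (a.2 - b.2 == 0) = (a.2 == b.2) by move=> a b; rewrite subr_eq0.
have E3 : forall a b : Gty p, (p %| nat_of_ord (a.1 - b.1)%R)%N = (rr a == rr b).
  by move=> a b; rewrite subZ_dvd.
case: (eqVneq d1 0) => [d10|d10].
  have d20 : d2 != 0 by apply: contra hd; rewrite d10 => /eqP ->.
  apply: (caseEN _ hp) => a b aA bA; apply: contra (Hno a b aA bA) => /andP [h1 h2].
  by rewrite /cond /rel1 /= d10 E1 h1 eqxx /= (negbTE d20) E2 (negbTE h2).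
case: (boolP (p %| d1)%N) => pd.
  case: (eqVneq d2 0) => [d20|d20].
    apply: (casePE _ hp) => a b aA bA; apply: contra (Hno a b aA bA) => /and3P [h1 h2 h3].
    by rewrite /cond /rel1 /= (negbTE d10) pd E1 (negbTE h2) E3 h1 d20 E2 h3.
  apply: (casePN _ hp) => a b aA bA; apply: contra (Hno a b aA bA) => /and3P [h1 h2 h3].
  by rewrite /cond /rel1 /= (negbTE d10) pd E1 (negbTE h2) E3 h1 (negbTE d20) E2 (negbTE h3).
case: (eqVneq d2 0) => [d20|d20].
  apply: (caseUE _ hp) => a b aA bA; apply: contra (Hno a b aA bA) => /andP [h1 h2].
  by rewrite /cond /rel1 /= (negbTE d10) pd E3 h1 d20 E2 h2.
apply: (caseUN _ hp) => a b aA bA; apply: contra (Hno a b aA bA) => /andP [h1 h2].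
by rewrite /cond /rel1 /= (negbTE d10) pd E3 h1 (negbTE d20) E2 (negbTE h2).
Qed.
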